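(* Let $W=(Y,Z)$ be a random vector with $Y$ real-valued and $\mathbb{E}[Y^2]<\infty$, and let $g_0(Z):=\mathbb{E}[Y\mid Z]$. Let $m(W;g)$ be a moment functional such that $g\mapsto \mathbb{E}[m(W;g)]$ is a continuous linear functional on $\{g:\mathbb{E}[g(Z)^2]<\infty\}$, with Riesz representer $\alpha_0$, i.e. $\alpha_0(Z)$ is square-integrable and $\mathbb{E}[m(W;g)]=\mathbb{E}[\alpha_0(Z)g(Z)]$ for all $g$ with $\mathbb{E}[g(Z)^2]<\infty$. Let $\theta_0:=\mathbb{E}[m(W;g_0)]$, let $A:=\alpha_0(Z)$ and let $h_0(a):=\mathbb{E}[Y\mid A=a]$. Then $$\theta_0=\mathbb{E}[m(W;h_0\circ\alpha_0)]=\mathbb{E}[h_0(\alpha_0(Z))\,\alpha_0(Z)].$$ That is, to estimate $\theta_0$ it suffices to estimate the regression function $h_0\circ\alpha_0$, which conditions only on the value of the Riesz representer.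
   Context: Here $h_0\circ\alpha_0$ denotes the function $z\mapsto h_0(\alpha_0(z))$, which is square-integrable as a function of $Z$ since it is a conditional expectation of the square-integrable $Y$. *)

(* Defs.v *)
From HB Require Import structures.
From mathcomp Require Import all_boot all_order all_algebra.
From mathcomp Require Import all_classical all_reals all_analysis.
Set Implicit Arguments. Unset Strict Implicit. Unset Printing Implicit Defensive.
Import Order.TTheory GRing.Theory Num.Theory.
Local Open Scope classical_set_scope.
Local Open Scope ring_scope.

Definition sq_integrable (d : measure_display) (T : measurableType d)
  (R : realType) (P : probability T R) (f : T -> R) : Prop :=
  measurable_fun setT f /\ P.-integrable setT (fun x => ((f x) ^+ 2)%:E).

(* g is a version of the conditional expectation E[Y | Z], i.e.
   g(Z) = E[Y | sigma(Z)]: g is measurable, g(Z) is integrable and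
   E[Y 1_{Z in B}] = E[g(Z) 1_{Z in B}] for every measurable B. *)
Definition is_cond_exp (d : measure_display) (T : measurableType d)
  (R : realType) (P : probability T R) (d' : measure_display)
  (U : measurableType d') (Y : T -> R) (Z : T -> U) (g : U -> R) : Prop :=
  [/\ measurable_fun setT g,
      P.-integrable setT (fun x => (g (Z x))%:E) &
      forall B : set U, measurable B ->
        (\int[P]_(x in Z @^-1` B) (Y x)%:E
         = \int[P]_(x in Z @^-1` B) (g (Z x))%:E)%E].

(* Main.v *)
Require Import Defs.
From HB Require Import structures.
From mathcomp Require Import all_boot all_order all_algebra.
From mathcomp Require Import all_classical all_reals all_analysis.
From mathcomp Require Import measurable_realfun.
From mathcomp Require Import lra.
Import Order.TTheory GRing.Theory Num.Theory.
Local Open Scope classical_set_scope.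
Local Open Scope ring_scope.
Local Open Scope ereal_scope.

Local Close Scope ereal_scope.
Section RR.
Context {R : realType}.
Definition clamp (n : nat) (r : R) : R := Num.max (- n%:R) (Num.min r n%:R).
Lemma clamp_norm n r : `|clamp n r| <= n%:R.
Proof.
rewrite /clamp; have n0 : 0 <= n%:R :> R by [].
case: (lerP r n%:R) => h1; case: (lerP (- n%:R) _) => h2; rewrite ler_norml; apply/andP; split; lra.
Qed.
Lemma clamp_sq n r : clamp n r * clamp n r <= clamp n r * r.
Proof.
rewrite /clamp; have n0 : 0 <= n%:R :> R by [].
case: (lerP r n%:R) => h1; case: (lerP (- n%:R) _) => h2; nra.
Qed.
Lemma clamp_id n r : `|r| <= n%:R -> clamp n r = r.
Proof.
rewrite ler_norml => /andP[h3 h4]; rewrite /clamp; have n0 : 0 <= n%:R :> R by [].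
case: (lerP r n%:R) => h1; case: (lerP (- n%:R) _) => h2; lra.
Qed.
Lemma clamp_nd n m r : (n <= m)%N -> clamp n r ^+ 2 <= clamp m r ^+ 2.
Proof.
move=> nm; have : n%:R <= m%:R :> R by rewrite ler_nat.
rewrite /clamp; have n0 : 0 <= n%:R :> R by [].
move=> h0.
case: (lerP r n%:R) => h1; case: (lerP (- n%:R) _) => h2;
case: (lerP r m%:R) => h3; case: (lerP (- m%:R) _) => h4; nra.
Qed.
Lemma norm_mul_le (a b : R) : `|a * b| <= a ^+ 2 + b ^+ 2.
Proof.
rewrite normrM -(real_normK (num_real a)) -(real_normK (num_real b)).
have := normr_ge0 a; have := normr_ge0 b; nra.
Qed.
Lemma norm_le_sq (a : R) : `|a| <= 1 + a ^+ 2.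
Proof. have := norm_mul_le a 1; rewrite mulr1 expr1n addrC; done. Qed.
Lemma two_mul_le (a b : R) : 2 * (a * b) <= a ^+ 2 + b ^+ 2.
Proof. have h := sqr_ge0 (a - b); rewrite !expr2 in h *; nra. Qed.
End RR.

Local Open Scope ereal_scope.
Section key.
Context d (T : measurableType d) d' (U : measurableType d') (R : realType).
Variable (mu : {measure set T -> \bar R}) (V : T -> U).
Hypothesis mV : measurable_fun setT V.
Import HBNNSimple.

Lemma simple_int (h : {nnsfun U >-> R}) (g : T -> R) :
  measurable_fun setT g -> (forall x, (0 <= g x)%R) ->
  \int[mu]_x ((h (V x))%:E * (g x)%:E) =
  \sum_(y \in range h) (y%:E * \int[mu]_(x in V @^-1` (h @^-1` [set y])) (g x)%:E).
Proof.
move=> mg g0.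
have mVS y : measurable (V @^-1` (h @^-1` [set y])).
  by rewrite -[X in measurable X]setTI; apply: mV => //; exact: measurable_sfunP.
under eq_integral => x _.
  rewrite fimfunE -fsumEFin // ge0_mule_fsuml; last first.
    by move=> y; exact: nnfun_muleindic_ge0.
  over.
rewrite ge0_integral_fsum //; last 2 first.
- move=> y; apply: emeasurable_funM; last exact/measurable_EFinP.
  apply/measurable_EFinP; apply: measurable_funM => //.
  by apply: measurableT_comp mV; apply/measurable_indicP; exact: measurable_sfunP.
- by move=> y x _; rewrite mule_ge0// ?nnfun_muleindic_ge0 ?lee_fin.
apply: eq_fsbigr => y yh.
under eq_integral do rewrite EFinM -muleA.
rewrite ge0_integralZl//; last 3 first.
- apply: emeasurable_funM; last exact/measurable_EFinP.
  apply/measurable_EFinP; apply: measurableT_comp mV; apply/measurable_indicP; exact: measurable_sfunP.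
- by move=> x _; rewrite mule_ge0// lee_fin.
- by move: yh; rewrite inE => -[t _ <-]; rewrite lee_fin.
congr (_ * _).
rewrite -(setTI (V @^-1` (h @^-1` [set y]))) integral_mkcondr epatch_indic.
apply: eq_integral => x _ /=; rewrite muleC; congr (_ * _).
Qed.


Lemma key (g1 g2 : T -> R) :
  measurable_fun setT g1 -> measurable_fun setT g2 ->
  (forall x, (0 <= g1 x)%R) -> (forall x, (0 <= g2 x)%R) ->
  (forall B, measurable B -> \int[mu]_(x in V @^-1` B) (g1 x)%:E
                          = \int[mu]_(x in V @^-1` B) (g2 x)%:E) ->
  forall f : U -> R, measurable_fun setT f -> (forall u, (0 <= f u)%R) ->
  \int[mu]_x ((f (V x))%:E * (g1 x)%:E) = \int[mu]_x ((f (V x))%:E * (g2 x)%:E).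
Proof.
move=> mg1 mg2 g10 g20 hB f mf f0.
have mf' : measurable_fun setT (EFin \o f) by exact/measurable_EFinP.
have f0' : forall u, setT u -> 0 <= (EFin \o f) u by move=> u _; rewrite lee_fin.
pose h := nnsfun_approx measurableT mf'.
have lim_int (g : T -> R) : measurable_fun setT g -> (forall x, (0 <= g x)%R) ->
    \int[mu]_x ((f (V x))%:E * (g x)%:E) =
    limn (fun n => \int[mu]_x ((h n (V x))%:E * (g x)%:E)).
  move=> mg g0; rewrite -monotone_convergence //.
  - apply: eq_integral => x _; apply/esym/cvg_lim => //.
    apply: cvgeZr => //.
    exact: (cvg_nnsfun_approx measurableT mf' f0' (I : setT (V x))).
  - move=> n; apply: emeasurable_funM; last exact/measurable_EFinP.
    apply/measurable_EFinP; apply: measurableT_comp mV.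
    exact: measurable_funPT.
  - by move=> n x _; rewrite mule_ge0// lee_fin.
  - move=> x _ a b ab; rewrite lee_wpmul2r ?lee_fin//.
    exact/lefP/nd_nnsfun_approx.
rewrite (lim_int g1) // (lim_int g2) //; congr (lim (_ @ \oo)); apply/funext => n.
rewrite !simple_int //; apply: eq_fsbigr => y _; rewrite hB //.
Qed.

End key.

Section helpers.
Context {R : realType}.
Lemma rpos_neg (r : R) : r = (Num.max r 0 - Num.max (- r) 0)%R.
Proof.
have [hr|hr] := lerP 0 r.
  by rewrite max_r ?subr0 // oppr_le0.
by rewrite max_l ?sub0r ?opprK // oppr_ge0 ltW.
Qed.
Lemma rpos_le (r : R) : (`|Num.max r 0| <= `|r|)%R.
Proof.
by have [hr|hr] := lerP 0 r; rewrite ?normr0.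
Qed.
Lemma rneg_le (r : R) : (`|Num.max (- r) 0| <= `|r|)%R.
Proof. by rewrite -(normrN r) rpos_le. Qed.
Lemma fin4 (x y z w : \bar R) : x \is a fin_num -> y \is a fin_num ->
  z \is a fin_num -> w \is a fin_num -> x + w = y + z -> x - y = z - w.
Proof.
case: x => // x; case: y => // y; case: z => // z; case: w => // w _ _ _ _.
by rewrite -!EFinD => -[e]; congr EFin; lra.
Qed.
End helpers.

Lemma int_split d (T : measurableType d) (R : realType) (mu : {measure set T -> \bar R})
  (A : set T) (F : T -> R) : measurable A -> mu.-integrable A (EFin \o F) ->
  [/\ mu.-integrable A (fun x => (Num.max (F x) 0)%:E),
      mu.-integrable A (fun x => (Num.max (- F x) 0)%:E) &
      \int[mu]_(x in A) (F x)%:E = \int[mu]_(x in A) (Num.max (F x) 0)%:E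
                                 - \int[mu]_(x in A) (Num.max (- F x) 0)%:E].
Proof.
move=> mA iF.
have mF : measurable_fun A F by apply/measurable_EFinP; exact: measurable_int iF.
have i1 : mu.-integrable A (fun x => (Num.max (F x) 0)%:E).
  apply: le_integrable iF => //.
    by apply/measurable_EFinP; apply: measurable_maxr.
  by move=> x _; rewrite /= lee_fin rpos_le.
have i2 : mu.-integrable A (fun x => (Num.max (- F x) 0)%:E).
  apply: le_integrable iF => //.
    by apply/measurable_EFinP; apply: measurable_maxr => //; apply: measurableT_comp.
  by move=> x _; rewrite /= lee_fin rneg_le.
split => //; rewrite -integralB //; apply: eq_integral => x _.
by rewrite -EFinB -rpos_neg.
Qed.

Lemma fin4r {R : realType} (x y z w : \bar R) : x \is a fin_num -> y \is a fin_num ->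
  z \is a fin_num -> w \is a fin_num -> x - y = z - w -> x + w = y + z.
Proof.
case: x => // x; case: y => // y; case: z => // z; case: w => // w _ _ _ _.
by rewrite -!EFinD => -[e]; congr EFin; lra.
Qed.

Section condexp.
Context d (T : measurableType d) (R : realType) (P : probability T R).
Context d' (U : measurableType d') (V : T -> U) (Y : T -> R) (h : U -> R).
Hypothesis mV : measurable_fun setT V.
Hypothesis iY : P.-integrable setT (EFin \o Y).
Hypothesis CE : is_cond_exp P Y V h.

Lemma cond_nonneg (f : U -> R) : measurable_fun setT f -> (forall u, (0 <= f u)%R) ->
  P.-integrable setT (fun x => (f (V x) * Y x)%:E) ->
  P.-integrable setT (fun x => (f (V x) * h (V x))%:E) ->
  \int[P]_x (f (V x) * Y x)%:E = \int[P]_x (f (V x) * h (V x))%:E.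
Proof.
move=> mf f0 ifY ifh.
case: CE => mh ih hB.
have mY : measurable_fun setT Y by apply/measurable_EFinP; exact: measurable_int iY.
have mhV : measurable_fun setT (h \o V) := measurableT_comp mh mV.
have mp (F : T -> R) : measurable_fun setT F -> measurable_fun setT (fun x => Num.max (F x) 0)%R.
  by move=> mF; apply: measurable_maxr.
have mn (F : T -> R) : measurable_fun setT F -> measurable_fun setT (fun x => Num.max (- F x) 0)%R.
  by move=> mF; apply: measurable_maxr => //; apply: measurableT_comp.
have ge0p (r : R) : (0 <= Num.max r 0)%R by rewrite le_max lexx orbT.
have hB' : forall B, measurable B ->
    \int[P]_(x in V @^-1` B) ((Num.max (Y x) 0 + Num.max (- h (V x)) 0)%R)%:E
  = \int[P]_(x in V @^-1` B) ((Num.max (- Y x) 0 + Num.max (h (V x)) 0)%R)%:E.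
  move=> B mB.
  have mA : measurable (V @^-1` B) by rewrite -[X in measurable X]setTI; exact: mV.
  have iYA : P.-integrable (V @^-1` B) (EFin \o Y) by exact: integrableS iY.
  have ihA : P.-integrable (V @^-1` B) (EFin \o (h \o V)) by exact: integrableS ih.
  have [i1 i2 e1] := @int_split _ _ _ P _ _ mA iYA.
  have [i3 i4 e2] := @int_split _ _ _ P _ _ mA ihA.
  rewrite (eq_integral (fun x => (Num.max (Y x) 0)%:E + (Num.max (- h (V x)) 0)%:E)); last by move=> x _; rewrite EFinD.
  rewrite [RHS](eq_integral (fun x => (Num.max (- Y x) 0)%:E + (Num.max (h (V x)) 0)%:E)); last by move=> x _; rewrite EFinD.
  rewrite !integralD //; apply: fin4r; try exact: integrable_fin_num.
  by rewrite -e1 -e2; exact: hB.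
have K := @key _ _ _ _ _ P V mV
  (fun x => Num.max (Y x) 0 + Num.max (- h (V x)) 0)%R
  (fun x => Num.max (- Y x) 0 + Num.max (h (V x)) 0)%R
  (measurable_funD (mp _ mY) (mn _ mhV)) (measurable_funD (mn _ mY) (mp _ mhV))
  (fun x => addr_ge0 (ge0p _) (ge0p _)) (fun x => addr_ge0 (ge0p _) (ge0p _)) hB' f mf f0.
have [ip1 in1 e1] := @int_split _ _ _ P _ (fun x => f (V x) * Y x)%R measurableT ifY.
have [ip2 in2 e2] := @int_split _ _ _ P _ (fun x => f (V x) * h (V x))%R measurableT ifh.
rewrite e1 e2; apply: fin4; try exact: integrable_fin_num.
rewrite -!integralD //.
have pw1 x : (f (V x))%:E * ((Num.max (Y x) 0 + Num.max (- h (V x)) 0)%R)%:E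
   = ((Num.max (f (V x) * Y x) 0)%:E + (Num.max (- (f (V x) * h (V x))) 0)%:E).
  by rewrite -EFinM -EFinD mulrDr !maxr_pMr // !mulr0 mulrN.
have pw2 x : (f (V x))%:E * ((Num.max (- Y x) 0 + Num.max (h (V x)) 0)%R)%:E
   = ((Num.max (- (f (V x) * Y x)) 0)%:E + (Num.max (f (V x) * h (V x)) 0)%:E).
  by rewrite -EFinM -EFinD mulrDr !maxr_pMr // !mulr0 mulrN.
by move: K; rewrite (eq_integral _ _ (fun x _ => pw1 x)) (eq_integral _ _ (fun x _ => pw2 x)).
Qed.
End condexp.

Lemma int_prod d (T : measurableType d) (R : realType) (mu : {measure set T -> \bar R})
  (F G : T -> R) : measurable_fun setT F -> measurable_fun setT G ->
  mu.-integrable setT (fun x => (F x ^+ 2)%:E) -> mu.-integrable setT (fun x => (G x ^+ 2)%:E) ->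
  mu.-integrable setT (fun x => (F x * G x)%:E).
Proof.
move=> mF mG iF iG.
have iFG : mu.-integrable setT (fun x => (F x ^+ 2 + G x ^+ 2)%:E).
  apply: (eq_integrable measurableT _ _ _ (integrableD measurableT iF iG)) => x _.
  by rewrite EFinD.
apply: (le_integrable measurableT _ _ iFG).
  by apply/measurable_EFinP; apply: measurable_funM.
move=> x _; rewrite lee_fin; apply: le_trans (norm_mul_le _ _) _.
exact: ler_norm.
Qed.

Lemma int_of_sq d (T : measurableType d) (R : realType) (P : probability T R)
  (F : T -> R) : measurable_fun setT F ->
  P.-integrable setT (fun x => (F x ^+ 2)%:E) -> P.-integrable setT (EFin \o F).
Proof.
move=> mF iF.
have i1 := @finite_measure_integrable_cst _ _ _ P setT 1%R measurableT.
have iFG : P.-integrable setT (fun x => (1 + F x ^+ 2)%:E).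
  apply: (eq_integrable measurableT _ _ _ (integrableD measurableT i1 iF)) => x _.
  by rewrite EFinD.
apply: (le_integrable measurableT _ _ iFG).
  exact/measurable_EFinP.
move=> x _; rewrite lee_fin; apply: le_trans (norm_le_sq _) _.
exact: ler_norm.
Qed.

Section condexp2.
Context d (T : measurableType d) (R : realType) (P : probability T R).
Context d' (U : measurableType d') (V : T -> U) (Y : T -> R) (h : U -> R).
Hypothesis mV : measurable_fun setT V.
Hypothesis iY : P.-integrable setT (EFin \o Y).
Hypothesis CE : is_cond_exp P Y V h.

Lemma cond_gen (f : U -> R) : measurable_fun setT f ->
  P.-integrable setT (fun x => (f (V x) * Y x)%:E) ->
  P.-integrable setT (fun x => (f (V x) * h (V x))%:E) ->
  \int[P]_x (f (V x) * Y x)%:E = \int[P]_x (f (V x) * h (V x))%:E.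
Proof.
move=> mf ifY ifh.
have [mh ih hB] := CE.
have mY : measurable_fun setT Y by apply/measurable_EFinP; exact: measurable_int iY.
have mhV : measurable_fun setT (h \o V) := measurableT_comp mh mV.
have ge0p (r : R) : (0 <= Num.max r 0)%R by rewrite le_max lexx orbT.
have mfp : measurable_fun setT (fun u => Num.max (f u) 0)%R by apply: measurable_maxr.
have mfn : measurable_fun setT (fun u => Num.max (- f u) 0)%R.
  by apply: measurable_maxr => //; apply: measurableT_comp.
have iZ (g : U -> R) (G : T -> R) : measurable_fun setT g -> measurable_fun setT G ->
    (forall u, `|g u| <= `|f u|)%R ->
    P.-integrable setT (fun x => (f (V x) * G x)%:E) ->
    P.-integrable setT (fun x => (g (V x) * G x)%:E).
  move=> mg mG gf iG; apply: (le_integrable measurableT _ _ iG).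
    by apply/measurable_EFinP; apply: measurable_funM => //; apply: measurableT_comp.
  by move=> x _; rewrite lee_fin !normrM ler_wpM2r.
have e (G : T -> R) : measurable_fun setT G ->
    P.-integrable setT (fun x => (f (V x) * G x)%:E) ->
    \int[P]_x (f (V x) * G x)%:E =
    \int[P]_x (Num.max (f (V x)) 0 * G x)%:E - \int[P]_x (Num.max (- f (V x)) 0 * G x)%:E.
  move=> mG iG; rewrite -integralB //; last 2 first.
  - apply: (iZ (fun u => Num.max (f u) 0)%R) => // u; exact: rpos_le.
  - apply: (iZ (fun u => Num.max (- f u) 0)%R) => // u; exact: rneg_le.
  by apply: eq_integral => x _; rewrite -EFinB -mulrBl -rpos_neg.
rewrite (e _ mY ifY) (e _ mhV ifh).
congr (_ - _).
  apply: (@cond_nonneg _ _ _ P _ _ V Y h mV iY CE (fun u => Num.max (f u) 0)%R) => //.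
  - apply: (iZ (fun u => Num.max (f u) 0)%R) => // u; exact: rpos_le.
  - apply: (iZ (fun u => Num.max (f u) 0)%R) => // u; exact: rpos_le.
apply: (@cond_nonneg _ _ _ P _ _ V Y h mV iY CE (fun u => Num.max (- f u) 0)%R) => //.
- apply: (iZ (fun u => Num.max (- f u) 0)%R) => // u; exact: rneg_le.
- apply: (iZ (fun u => Num.max (- f u) 0)%R) => // u; exact: rneg_le.
Qed.

Lemma cond_sq : P.-integrable setT (fun x => (Y x ^+ 2)%:E) ->
  P.-integrable setT (fun x => (h (V x) ^+ 2)%:E).
Proof.
move=> iY2.
have [mh ih hB] := CE.
have mY : measurable_fun setT Y by apply/measurable_EFinP; exact: measurable_int iY.
have mhV : measurable_fun setT (h \o V) := measurableT_comp mh mV.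
have mc n : measurable_fun setT (fun u => clamp n (h u)).
  by apply: measurable_maxr => //; apply: measurable_minr.
have mcV n : measurable_fun setT (fun x => clamp n (h (V x))).
  exact: (measurableT_comp (mc n) mV).
have mg n : measurable_fun setT (fun x => ((clamp n (h (V x))) ^+ 2)%:E).
  by apply/measurable_EFinP; apply: measurable_funX.
have bnd n : \int[P]_x ((clamp n (h (V x))) ^+ 2)%:E <= \int[P]_x (Y x ^+ 2)%:E.
  pose F := fun u => (2 * clamp n (h u))%R.
  have mF : measurable_fun setT F by apply: measurable_funM.
  have n0 : (0 <= 2 * n%:R :> R)%R by [].
  have iFG (G : T -> R) : measurable_fun setT G -> P.-integrable setT (EFin \o G) ->
      P.-integrable setT (fun x => (F (V x) * G x)%:E).
    move=> mG iG.
    apply: (le_integrable measurableT _ _ (integrableZl measurableT (2 * n%:R)%R iG)).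
      by apply/measurable_EFinP; apply: measurable_funM => //; apply: measurableT_comp.
    move=> x _; change ((EFin \o G) x) with ((G x)%:E); rewrite -EFinM lee_fin !normrM ler_wpM2r //.
    by rewrite !normr_nat ler_wpM2l // clamp_norm.
  have iFY := iFG Y mY iY.
  have iFh := iFG (h \o V) mhV ih.
  have iC2 : P.-integrable setT (fun x => ((clamp n (h (V x))) ^+ 2)%:E).
    have i1 := @finite_measure_integrable_cst _ _ _ P setT (n%:R ^+ 2)%R measurableT.
    apply: (le_integrable measurableT _ _ i1) => // x _.
    have := clamp_norm n (h (V x)); rewrite ler_norml => /andP[a b].
    change ((EFin \o cst ((n%:R : R) ^+ 2)%R) x) with (((n%:R : R) ^+ 2)%R%:E).
    rewrite lee_fin ger0_norm ?sqr_ge0 // ger0_norm ?sqr_ge0 //.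
    rewrite !expr2; nra.
  have E := @cond_gen F mF iFY iFh.
  have L1 : \int[P]_x ((clamp n (h (V x))) ^+ 2)%:E + \int[P]_x ((clamp n (h (V x))) ^+ 2)%:E
          <= \int[P]_x (F (V x) * h (V x))%:E.
    rewrite -integralD //; apply: le_integral => //.
      exact: integrableD.
    move=> x _; rewrite -EFinD lee_fin /F.
    have := clamp_sq n (h (V x)); rewrite expr2; nra.
  have L2 : \int[P]_x (F (V x) * Y x)%:E
          <= \int[P]_x ((clamp n (h (V x))) ^+ 2)%:E + \int[P]_x (Y x ^+ 2)%:E.
    rewrite -integralD //; apply: le_integral => //.
      exact: integrableD.
    by move=> x _; rewrite -EFinD lee_fin /F -mulrA two_mul_le.
  rewrite -(leeD2lE _ _ (integrable_fin_num measurableT iC2)).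
  by apply: le_trans L1 _; rewrite -E.
have ge0g n x : 0 <= ((clamp n (h (V x))) ^+ 2)%:E by rewrite lee_fin sqr_ge0.
have nd x : {homo (fun n => ((clamp n (h (V x))) ^+ 2)%:E) : n m / (n <= m)%N >-> n <= m}.
  by move=> a b ab; rewrite lee_fin clamp_nd.
have lim_eq : \int[P]_x (h (V x) ^+ 2)%:E =
    limn (fun n => \int[P]_x ((clamp n (h (V x))) ^+ 2)%:E).
  rewrite -monotone_convergence //; apply: eq_integral => x _.
  apply/esym/cvg_lim => //; apply: cvg_near_cst.
  exists (Num.bound `|h (V x)|) => // n /= hn.
  rewrite clamp_id //; apply: (le_trans (ltW (archi_boundP (normr_ge0 _)))).
  by rewrite ler_nat.
apply/integrableP; split.
  by apply/measurable_EFinP; apply: measurable_funX.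
rewrite (eq_integral (fun x => (h (V x) ^+ 2)%:E)); last first.
  by move=> x _; rewrite gee0_abs // lee_fin sqr_ge0.
apply: (@le_lt_trans _ _ (\int[P]_x (Y x ^+ 2)%:E)).
  rewrite lim_eq; apply: lime_le.
    apply: ereal_nondecreasing_is_cvgn => a b ab.
    apply: ge0_le_integral => //.
    all: try (by move=> x _; exact: ge0g).
    by move=> x _; exact: nd.
  by apply: nearW => n; exact: bnd.
have /integrableP[_] := iY2.
rewrite (eq_integral (fun x => (Y x ^+ 2)%:E)) //.
by move=> x _; rewrite gee0_abs // lee_fin sqr_ge0.
Qed.

End condexp2.

Local Close Scope ereal_scope.

Theorem lemma1 (d : measure_display) (T : measurableType d) (R : realType)
  (P : probability T R) (d' : measure_display) (Zt : measurableType d')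
  (Y : T -> R) (Z : T -> Zt)
  (m : R * Zt -> (Zt -> R) -> R) (alpha0 g0 : Zt -> R) (h0 : R -> R) :
  sq_integrable P Y ->
  measurable_fun setT Z ->
  is_cond_exp P Y Z g0 ->
  measurable_fun setT alpha0 ->
  sq_integrable P (alpha0 \o Z) ->
  (forall g : Zt -> R, measurable_fun setT g -> sq_integrable P (g \o Z) ->
     P.-integrable setT (fun x => (m (Y x, Z x) g)%:E) /\
     (\int[P]_x (m (Y x, Z x) g)%:E
      = \int[P]_x (alpha0 (Z x) * g (Z x))%:E)%E) ->
  is_cond_exp P Y (alpha0 \o Z) h0 ->
  (\int[P]_x (m (Y x, Z x) g0)%:E
   = \int[P]_x (m (Y x, Z x) (h0 \o alpha0))%:E)%E /\
  (\int[P]_x (m (Y x, Z x) (h0 \o alpha0))%:E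
   = \int[P]_x (h0 (alpha0 (Z x)) * alpha0 (Z x))%:E)%E.
Proof.
move=> [mY iY2] mZ CEg ma [maZ ia2] Hm CEh.
have iY := @int_of_sq _ _ _ P _ mY iY2.
have mA : measurable_fun setT (alpha0 \o Z) := measurableT_comp ma mZ.
have [mg0 _ _] := CEg.
have [mh0 _ _] := CEh.
have g2 := @cond_sq _ _ _ P _ _ Z Y g0 mZ iY CEg iY2.
have h2 := @cond_sq _ _ _ P _ _ (alpha0 \o Z) Y h0 mA iY CEh iY2.
have [_ Eh] := Hm (h0 \o alpha0) (measurableT_comp mh0 ma)
  (conj (measurableT_comp mh0 mA) h2).
have [_ Eg] := Hm g0 mg0 (conj (measurableT_comp mg0 mZ) g2).
have part2 : (\int[P]_x (m (Y x, Z x) (h0 \o alpha0))%:E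
   = \int[P]_x (h0 (alpha0 (Z x)) * alpha0 (Z x))%:E)%E.
  by rewrite Eh; apply: eq_integral => x _; rewrite mulrC.
split; last exact: part2.
rewrite part2 Eg.
have e1 := @cond_gen _ _ _ P _ _ Z Y g0 mZ iY CEg alpha0 ma
  (@int_prod _ _ _ P _ _ maZ mY ia2 iY2) (@int_prod _ _ _ P _ _ maZ (measurableT_comp mg0 mZ) ia2 g2).
have e2 := @cond_gen _ _ _ P _ _ (alpha0 \o Z) Y h0 mA iY CEh idfun (@measurable_id _ _ setT)
  (@int_prod _ _ _ P _ _ maZ mY ia2 iY2) (@int_prod _ _ _ P _ _ maZ (measurableT_comp mh0 mA) ia2 h2).
rewrite -e1; rewrite /= in e2; rewrite e2.
by apply: eq_integral => x _; rewrite mulrC.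
Qed.
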